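(* For all $t\ge1$ and all $\mathbf{x}\in\mathcal{X}$, \[ |\sigma_{\mathrm{fb}[t]}(\mathbf{x})-\widetilde\sigma_{\mathrm{fb}[t]}(\mathbf{x})|\le\sqrt{(L+1)\varepsilon\Big(1+\frac{4\hat K_0^2t^2}{\sigma^4}\Big)}. \]
   Context: $\mathcal{X}$ is a finite subset of the unit ball of $\mathbb{R}^d$. $k$ is a kernel (the exact NTK) with $k(\mathbf{x},\mathbf{x}')\le K_0$ for all $\mathbf{x},\mathbf{x}'$, and $\widetilde k(\mathbf{x},\mathbf{x}')=\langle\nabla_\theta f(\mathbf{x};\theta_0),\nabla_\theta f(\mathbf{x}';\theta_0)\rangle$ is the empirical NTK of a network with $L+1$ layers at initialization $\theta_0$. It is assumed that $|\widetilde k(\mathbf{x},\mathbf{x}')-k(\mathbf{x},\mathbf{x}')|\le(L+1)\varepsilon$ for all $\mathbf{x},\mathbf{x}'\in\mathcal{X}$, that $(L+1)\varepsilon\le1$ and that $\sigma^2\le1$; $\hat K_0=\max\{1,K_0\}$. Queries $\mathbf{x}_1,\mathbf{x}_2,\dots$ are indexed sequentially and $\mathrm{fb}[t]\le t-1$ is the number of observed queries when $\mathbf{x}_t$ is chosen. $\sigma^2_{\mathrm{fb}[t]}(\mathbf{x})=k(\mathbf{x},\mathbf{x})-\mathbf{k}_t(\mathbf{x})^\top(\mathbf{K}_t+\sigma^2I)^{-1}\mathbf{k}_t(\mathbf{x})$ with $\mathbf{k}_t(\mathbf{x})=(k(\mathbf{x},\mathbf{x}_\tau))_{\tau\le\mathrm{fb}[t]}$,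 $\mathbf{K}_t=(k(\mathbf{x}_\tau,\mathbf{x}_{\tau'}))_{\tau,\tau'\le\mathrm{fb}[t]}$; $\widetilde\sigma^2_{\mathrm{fb}[t]}$ is defined identically with $\widetilde k$ in place of $k$. *)

(* Defs.v *)
From mathcomp Require Import all_boot all_order all_algebra.
Set Implicit Arguments. Unset Strict Implicit. Unset Printing Implicit Defensive.
Import Order.TTheory GRing.Theory Num.Theory.
Local Open Scope ring_scope.

Section GP.
Variables (R : rcfType) (d : nat).
Notation V := 'rV[R]_d.

Definition gram (k : V -> V -> R) (n : nat) (pts : 'I_n -> V) : 'M[R]_n :=
  \matrix_(i, j) k (pts i) (pts j).

Definition kvec (k : V -> V -> R) (n : nat) (pts : 'I_n -> V) (x : V) : 'cV[R]_n :=
  \col_i k x (pts i).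

Definition post_var (k : V -> V -> R) (s2 : R) (n : nat) (pts : 'I_n -> V) (x : V) : R :=
  k x x - ((kvec k pts x)^T *m invmx (gram k pts + s2%:M) *m kvec k pts x) 0 0.

(* the observed queries x_1, ..., x_n (queries are 1-indexed) *)
Definition obs (xs : nat -> V) (n : nat) : 'I_n -> V := fun i => xs (i.+1)%N.

(* empirical kernel induced by a feature map (e.g. the gradient at theta_0) *)
Definition feat_kernel (p : nat) (g : V -> 'rV[R]_p) : V -> V -> R :=
  fun x x' => (g x *m (g x')^T) 0 0.

Definition psd_kernel_on (X : seq V) (k : V -> V -> R) : Prop :=
  (forall x x', x \in X -> x' \in X -> k x x' = k x' x) /\
  (forall (n : nat) (pts : 'I_n -> V), (forall i, pts i \in X) ->
     forall c : 'cV[R]_n, 0 <= (c^T *m gram k pts *m c) 0 0).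

Definition in_unit_ball (x : V) : Prop := \sum_i (x 0 i) ^+ 2 <= 1.
End GP.
Arguments obs {R d} xs n _.

(* Main.v *)
Require Import Defs.
From mathcomp Require Import all_boot all_order all_algebra.
From mathcomp Require Import ring lra.
Set Implicit Arguments. Unset Strict Implicit.
Import Order.TTheory GRing.Theory Num.Theory.
Local Open Scope ring_scope.

Section H.
Variable R : rcfType.

Lemma sqrt_diff (a b : R) : `|Num.sqrt a - Num.sqrt b| <= Num.sqrt `|a - b|.
Proof.
rewrite -[X in X <= _]sqrtr_sqr; apply: ler_wsqrtr.
have h1 : a - b <= `|a - b| by apply: ler_norm.
have h2 : b - a <= `|a - b| by rewrite distrC; apply: ler_norm.
have pa := sqrtr_ge0 a; have pb := sqrtr_ge0 b.
have [ha|ha] := lerP 0 a; have [hb|hb] := lerP 0 b.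
- have ea := sqr_sqrtr ha; have eb := sqr_sqrtr hb.
  move: pa pb ea eb; set p := Num.sqrt a; set q := Num.sqrt b => pa pb ea eb.
  rewrite -ea -eb in h1 h2 *.
  have [hab|hab] := lerP p q.
    have hq : 0 <= q - p by rewrite subr_ge0.
    have := mulr_ge0 hq pa; nra.
  have hq : 0 <= p - q by rewrite subr_ge0 ltW.
  have := mulr_ge0 hq pb; nra.
- rewrite (ltr0_sqrtr hb); have ea := sqr_sqrtr ha. nra.
- rewrite (ltr0_sqrtr ha); have eb := sqr_sqrtr hb. nra.
- rewrite (ltr0_sqrtr ha) (ltr0_sqrtr hb). nra.
Qed.

Lemma dotE n (u v : 'cV[R]_n) : (u^T *m v) 0 0 = \sum_i u i 0 * v i 0.
Proof. by rewrite mxE; apply: eq_bigr => i _; rewrite mxE. Qed.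

Lemma qfE n (u v : 'cV[R]_n) (D : 'M[R]_n) :
  (u^T *m D *m v) 0 0 = \sum_j (\sum_i u i 0 * D i j) * v j 0.
Proof.
rewrite mxE; apply: eq_bigr => j _; rewrite mxE; congr (_ * _).
by apply: eq_bigr => i _; rewrite mxE.
Qed.

Definition PSD n (K : 'M[R]_n) := forall c : 'cV[R]_n, 0 <= (c^T *m K *m c) 0 0.
Arguments PSD {n}.

Lemma unitA n (K : 'M[R]_n) (s : R) : 0 < s -> PSD K -> K + s%:M \in unitmx.
Proof.
move=> s0 HK; rewrite unitmxE unitfE; apply/negP => /det0P [v vn0 hv].
move: hv; rewrite mulmxDr mul_mx_scalar => hv.
have := HK v^T; rewrite trmxK.
have -> : v *m K = - (s *: v) by apply/eqP; rewrite -addr_eq0 hv.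
rewrite mulNmx -scalemxAl mxE (mxE _ _ 0 0) => H.
have hpos : 0 < \sum_i v 0 i ^+ 2.
  rewrite lt_def; apply/andP; split; last first.
    by apply: sumr_ge0 => i _; rewrite sqr_ge0.
  rewrite psumr_eq0; last by move=> i _; rewrite sqr_ge0.
  apply: contra vn0 => /allP hall; apply/eqP/matrixP => i j.
  rewrite (ord1 i) mxE; have := hall j (mem_index_enum _).
  by rewrite sqrf_eq0 => /eqP.
have e : (v *m v^T) 0 0 = \sum_i v 0 i ^+ 2.
  by rewrite mxE; apply: eq_bigr => i _; rewrite mxE expr2.
rewrite e in H.
nra.
Qed.

Lemma S1bound n (K : 'M[R]_n) (a : 'cV[R]_n) (s M : R) :
  0 < s -> 0 < M -> PSD K -> (forall i, `|a i 0| <= M) ->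
  \sum_i `|(invmx (K + s%:M) *m a) i 0| <= n%:R * M / s.
Proof.
move=> s0 M0 HK Ha.
set u := invmx (K + s%:M) *m a.
have Au : (K + s%:M) *m u = a by rewrite /u mulKVmx // unitA.
set S1 := \sum_i `|u i 0|.
set N2 := \sum_i u i 0 ^+ 2.
set P := \sum_i u i 0 * a i 0.
have F1 : s * N2 <= P.
  have e : P = (u^T *m K *m u) 0 0 + s * N2.
    rewrite /P -dotE -Au mulmxA mulmxDr mul_mx_scalar mulmxDl mxE.
    congr (_ + _); rewrite -scalemxAl mxE dotE /N2 mulr_sumr.
    by apply: eq_bigr => i _; rewrite ?expr2.
  rewrite e; have := HK u; lra.
have F2 : P <= M * S1.
  rewrite /P /S1 mulr_sumr; apply: ler_sum => i _.
  apply: le_trans (ler_norm _) _; rewrite normrM mulrC.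
  by apply: ler_wpM2r => //; apply: normr_ge0.
have F3 : 2 * M * s * S1 <= s ^+ 2 * N2 + n%:R * M ^+ 2.
  have e : n%:R * M ^+ 2 = \sum_(i < n) M ^+ 2.
    by rewrite sumr_const card_ord mulr_natl.
  rewrite e /S1 /N2 mulr_sumr mulr_sumr -big_split /=; apply: ler_sum => i _.
  have h : 0 <= (s * `|u i 0| - M) ^+ 2 by apply: sqr_ge0.
  have h2 : `|u i 0| ^+ 2 = u i 0 ^+ 2 by rewrite real_normK // num_real.
  nra.
have S0 : 0 <= S1 by apply: sumr_ge0 => i _; apply: normr_ge0.
rewrite ler_pdivlMr //.
have : M * s * S1 <= n%:R * M ^+ 2 by nra.
move=> h.
have : M * (S1 * s - n%:R * M) <= 0 by nra.
rewrite pmulr_rle0 //; lra.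
Qed.

Lemma core n (K K' : 'M[R]_n) (a a' : 'cV[R]_n) (s dl M M' : R) :
  0 < s -> 0 < M -> 0 < M' -> 0 <= dl -> K^T = K -> PSD K -> PSD K' ->
  (forall i j, `|K' i j - K i j| <= dl) -> (forall i, `|a i 0 - a' i 0| <= dl) ->
  (forall i, `|a i 0| <= M) -> (forall i, `|a' i 0| <= M') ->
  `|(a^T *m invmx (K + s%:M) *m a) 0 0 - (a'^T *m invmx (K' + s%:M) *m a') 0 0|
   <= dl * (n%:R * M / s + n%:R * M' / s + n%:R * M / s * (n%:R * M' / s)).
Proof.
move=> s0 M0 M'0 d0 Ks HK HK' HdK Hda Ha Ha'.
have Su := S1bound s0 M0 HK Ha.
have Sv := S1bound s0 M'0 HK' Ha'.
set A := K + s%:M in Su *; set B := K' + s%:M in Sv *.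
set u := invmx A *m a in Su *; set v := invmx B *m a' in Sv *.
have Au : A *m u = a by rewrite /u mulKVmx // unitA.
have Bv : B *m v = a' by rewrite /v mulKVmx // unitA.
have At : A^T = A by rewrite /A linearD /= Ks tr_scalar_mx.
rewrite -!mulmxA -/u -/v.
have e1 : (u^T *m a) 0 0 = (a^T *m u) 0 0.
  by rewrite !dotE; apply: eq_bigr => i _; rewrite mulrC.
have e2 : (u^T *m B *m v) 0 0 = (u^T *m a') 0 0 by rewrite -mulmxA Bv.
have e3 : (u^T *m A *m v) 0 0 = (a^T *m v) 0 0.
  by rewrite -At -trmx_mul Au.
have e4 : (u^T *m (K' - K) *m v) 0 0 = (u^T *m B *m v) 0 0 - (u^T *m A *m v) 0 0.
  have -> : K' - K = B - A by rewrite /A /B opprD addrACA subrr addr0.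
  by rewrite mulmxBr mulmxBl !mxE.
have e5 : (u^T *m (a - a')) 0 0 = (u^T *m a) 0 0 - (u^T *m a') 0 0.
  by rewrite mulmxBr !mxE.
have e6 : ((a - a')^T *m v) 0 0 = (a^T *m v) 0 0 - (a'^T *m v) 0 0.
  by rewrite linearB /= mulmxBl !mxE.
have -> : (a^T *m u) 0 0 - (a'^T *m v) 0 0 =
   (u^T *m (a - a')) 0 0 + (u^T *m (K' - K) *m v) 0 0 + ((a - a')^T *m v) 0 0.
  rewrite e4 e5 e6 e2 e3 -e1; ring.
set S1u := \sum_i `|u i 0| in Su; set S1v := \sum_i `|v i 0| in Sv.
have S1u0 : 0 <= S1u by apply: sumr_ge0 => i _; apply: normr_ge0.
have S1v0 : 0 <= S1v by apply: sumr_ge0 => i _; apply: normr_ge0.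
have T1 : `|(u^T *m (a - a')) 0 0| <= dl * S1u.
  rewrite dotE /S1u mulr_sumr; apply: le_trans (ler_norm_sum _ _ _) _.
  apply: ler_sum => i _; rewrite normrM mulrC.
  apply: ler_wpM2r; first exact: normr_ge0.
  by rewrite !mxE; exact: Hda.
have T3 : `|((a - a')^T *m v) 0 0| <= dl * S1v.
  rewrite dotE /S1v mulr_sumr; apply: le_trans (ler_norm_sum _ _ _) _.
  apply: ler_sum => i _; rewrite normrM.
  apply: ler_wpM2r; first exact: normr_ge0.
  by rewrite !mxE; exact: Hda.
have T2 : `|(u^T *m (K' - K) *m v) 0 0| <= dl * S1u * S1v.
  rewrite qfE /S1v mulr_sumr; apply: le_trans (ler_norm_sum _ _ _) _.
  apply: ler_sum => j _; rewrite normrM.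
  apply: ler_wpM2r; first by apply: normr_ge0.
  rewrite /S1u mulr_sumr; apply: le_trans (ler_norm_sum _ _ _) _.
  apply: ler_sum => i _; rewrite normrM mulrC.
  apply: ler_wpM2r; first exact: normr_ge0.
  by rewrite !mxE; exact: HdK.
have h := ler_normD ((u^T *m (a - a')) 0 0 + (u^T *m (K' - K) *m v) 0 0)
            (((a - a')^T *m v) 0 0).
have h' := ler_normD ((u^T *m (a - a')) 0 0) ((u^T *m (K' - K) *m v) 0 0).
set X := n%:R * M / s in Su *; set Y := n%:R * M' / s in Sv *.
have : dl * S1u * S1v <= dl * X * Y.
  have hp := ler_pM S1u0 S1v0 Su Sv.
  by rewrite -mulrA -(mulrA dl); apply: ler_wpM2l.
move=> hXY.
have hX : dl * S1u <= dl * X by apply: ler_wpM2l.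
have hY : dl * S1v <= dl * Y by apply: ler_wpM2l.
have -> : dl * (X + Y + X * Y) = dl * X + dl * Y + dl * X * Y by ring.
lra.
Qed.

Lemma featPSD d p (g : 'rV[R]_d -> 'rV[R]_p) n (pts : 'I_n -> 'rV[R]_d) :
  PSD (gram (feat_kernel g) pts).
Proof.
move=> c; set F := \matrix_(i, l) g (pts i) 0 l.
have -> : gram (feat_kernel g) pts = F *m F^T.
  apply/matrixP => i j; rewrite !mxE /feat_kernel mxE; apply: eq_bigr => l _; rewrite !mxE.
  by [].
set w := F^T *m c.
have -> : c^T *m (F *m F^T) *m c = w^T *m w by rewrite /w trmx_mul trmxK !mulmxA.
by rewrite dotE; apply: sumr_ge0 => i _; rewrite -expr2 sqr_ge0.
Qed.

Lemma kabs d (X : seq 'rV[R]_d) (k : 'rV[R]_d -> 'rV[R]_d -> R) K0 y z :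
  psd_kernel_on X k -> (forall x x', x \in X -> x' \in X -> k x x' <= K0) ->
  y \in X -> z \in X -> `|k y z| <= K0.
Proof.
case=> Hs Hp Hk yX zX.
pose pts2 := fun i : 'I_2 => if (i : nat) == 0%N then y else z.
have := Hp 2%N pts2 _ (const_mx 1).
have P2 : forall i, pts2 i \in X by move=> i; rewrite /pts2; case: ifP.
move=> /(_ P2); rewrite qfE !big_ord_recl !big_ord0 !mxE /= => H.
have := Hk _ _ yX yX; have := Hk _ _ zX zX; have := Hs _ _ yX zX.
rewrite ler_norml; move: H; rewrite /pts2 /=. 
move=> H e h1 h2; have := Hk _ _ yX zX => h3; apply/andP; split; lra.
Qed.
End H.

Theorem lemma9 (R : rcfType) (d p L : nat) (X : seq 'rV[R]_d)
  (k : 'rV[R]_d -> 'rV[R]_d -> R) (g : 'rV[R]_d -> 'rV[R]_p)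
  (K0 eps sigma : R) (xs : nat -> 'rV[R]_d) (fb : nat -> nat) :
  (forall x, x \in X -> in_unit_ball x) ->
  psd_kernel_on X k ->
  (forall x x', x \in X -> x' \in X -> k x x' <= K0) ->
  (forall x x', x \in X -> x' \in X ->
     `|feat_kernel g x x' - k x x'| <= (L + 1)%:R * eps) ->
  (L + 1)%:R * eps <= 1 ->
  0 < sigma -> sigma ^+ 2 <= 1 ->
  (forall t, (1 <= t)%N -> xs t \in X) ->
  (forall t, (1 <= t)%N -> (fb t <= t.-1)%N) ->
  forall t, (1 <= t)%N -> forall x, x \in X ->
    let Khat := Num.max 1 K0 in
    `| Num.sqrt (post_var k (sigma ^+ 2) (obs xs (fb t)) x)
       - Num.sqrt (post_var (feat_kernel g) (sigma ^+ 2) (obs xs (fb t)) x) |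
    <= Num.sqrt ((L + 1)%:R * eps
                 * (1 + 4%:R * Khat ^+ 2 * (t%:R) ^+ 2 / sigma ^+ 4)).
Proof.
move=> HX Hpsd Hk Hfk Hd1 sg0 sg1 Hxs Hfb t t1 x xX; cbv zeta.
set Khat := Num.max 1 K0.
have nt : (fb t < t)%N.
  by have := Hfb t t1; rewrite -ltnS prednK.
set n := fb t in nt *; set pts := obs xs n.
set dl := (L + 1)%:R * eps in Hfk Hd1 *.
have ptsX : forall i, pts i \in X by move=> i; apply: Hxs.
have Hpsd0 := Hpsd; case: Hpsd0 => Hsym Hpsd'.
have d0 : 0 <= dl by apply: le_trans (Hfk x x xX xX); apply: normr_ge0.
have Kabs : forall y z, y \in X -> z \in X -> `|k y z| <= K0.
  by move=> y z yX zX; apply: kabs Hpsd Hk yX zX.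
have K1 : 1 <= Khat by rewrite /Khat le_max lexx.
have K0le : K0 <= Khat by rewrite /Khat le_max lexx orbT.
set s := sigma ^+ 2 in sg1 *.
have s0 : 0 < s by rewrite exprn_gt0.
have Kh0 : 0 < Khat by apply: lt_le_trans K1; apply: ltr01.
have K2 : 0 < 2 * Khat by rewrite mulr_gt0 // ltr0n.
have C := @core R n (gram k pts) (gram (feat_kernel g) pts)
  (kvec k pts x) (kvec (feat_kernel g) pts x) s dl Khat (2 * Khat)
  s0 Kh0 K2 d0.
have h1 : (gram k pts)^T = gram k pts.
  by apply/matrixP => i j; rewrite !mxE; apply: Hsym.
have h2 : PSD (gram k pts) by move=> c; apply: Hpsd'; exact: ptsX.
have h3 : forall i j, `|gram (feat_kernel g) pts i j - gram k pts i j| <= dl.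
  by move=> i j; rewrite !mxE; apply: Hfk.
have h4 : forall i, `|kvec k pts x i 0 - kvec (feat_kernel g) pts x i 0| <= dl.
  by move=> i; rewrite !mxE distrC; apply: Hfk.
have h5 : forall i, `|kvec k pts x i 0| <= Khat.
  by move=> i; rewrite !mxE; apply: le_trans (Kabs _ _ xX (ptsX i)) K0le.
have h6 : forall i, `|kvec (feat_kernel g) pts x i 0| <= 2 * Khat.
  move=> i; rewrite mxE.
  have := Hfk x (pts i) xX (ptsX i); have := Kabs _ _ xX (ptsX i).
  rewrite !ler_norml => /andP[a1 a2] /andP[b1 b2].
  apply/andP; split; lra.
have Cb := C h1 h2 (featPSD g pts) h3 h4 h5 h6.
apply: le_trans (sqrt_diff _ _) _; apply: ler_wsqrtr.
rewrite /post_var.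
set qa := ((kvec k pts x)^T *m _ *m _) 0 0 in Cb *.
set qb := ((kvec (feat_kernel g) pts x)^T *m _ *m _) 0 0 in Cb *.
have hx : `|k x x - feat_kernel g x x| <= dl by rewrite distrC; apply: Hfk.
have e : k x x - qa - (feat_kernel g x x - qb) = (k x x - feat_kernel g x x) + - (qa - qb) by ring.
rewrite e; apply: le_trans (ler_normD _ _) _; rewrite normrN.
set W := Khat / s.
have W1 : 1 <= W by rewrite /W ler_pdivlMr // mul1r; apply: le_trans sg1 K1.
have eX : n%:R * Khat / s = n%:R * W by rewrite /W mulrA.
have eY : n%:R * (2 * Khat) / s = 2 * (n%:R * W) by rewrite /W; ring.
rewrite eX eY in Cb.
have sn0 : sigma != 0 by rewrite gt_eqF.
have eT : 4%:R * Khat ^+ 2 * t%:R ^+ 2 / sigma ^+ 4 = 4 * W ^+ 2 * t%:R ^+ 2.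
  by rewrite /W /s; field.
rewrite eT.
have tn : n%:R + 1 <= t%:R :> R by rewrite natr1 ler_nat.
have n0 : 0 <= n%:R :> R by apply: ler0n.
set N := n%:R in Cb tn n0 *; set T := t%:R in tn *.
have hW : N * W <= N * W ^+ 2.
  have W0 : 0 <= W by apply: le_trans W1; apply: ler01.
  have W1' : 0 <= W - 1 by rewrite subr_ge0.
  have := mulr_ge0 (mulr_ge0 n0 W0) W1'.
  rewrite expr2; lra.
have hT : (N + 1) ^+ 2 <= T ^+ 2 by rewrite !expr2; apply: ler_pM; lra.
have inner : N * W + 2 * (N * W) + N * W * (2 * (N * W)) <= 4 * W ^+ 2 * T ^+ 2.
  have hW2 : 0 <= W ^+ 2 by apply: sqr_ge0.
  have := ler_wpM2l hW2 hT. nra.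
have := ler_wpM2l d0 inner.
lra.
Qed.
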